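(* Let $\mu,\nu\in\mathcal{P}(\mathcal{X})$, $0<m_1\le m_2<\infty$, $K:\mathcal{X}\times\mathcal{X}\to(0,1]$ measurable with lower decay $l$, and let $(\alpha_1,\tilde\alpha_1)$, $(\alpha_2,\tilde\alpha_2)$ be pairs of tail functions (with $\mu(B_{m_1})>0$, $\nu(B_{m_1})>0$, $\alpha_1,\alpha_2>0$). Define \[ \tilde\beta_2(r)=\frac{1}{\nu(B_{m_1})}\sup_{a\ge r}\frac{\nu(B_a^{\mathsf c})}{\alpha_2(a)\wedge1}\ (r\ge m_1),\qquad \beta_2(r)=\frac{1}{\nu(B_{m_1})}\Big(\sup_{a\ge r}\frac{\nu(B_a^{\mathsf c})}{\tilde\alpha_2(a)}+\nu(B_r^{\mathsf c})\Big)\ (r\ge m_2). \] Let $r\ge m_2$ and assume $\tilde\alpha_1(m_2)\le0.5$, $\tilde\beta_2(m_1)\le0.5$ and $l(r)\le1$. Then for all $f\in\mathcal{F}^{\mu,norm}_{\alpha_1,\tilde\alpha_1}$ and $g\in\mathcal{G}^{\nu,norm}_{\alpha_2,\tilde\alpha_2}$, \[ \int L_{K^\top,\nu}(g)f\,d\mu\ge l(r)-\tilde\alpha_1(m_2)-4\tilde\beta_2(m_1)-4\alpha_1(r)-4\tilde\alpha_1(r)-5\beta_2(r)-5\tilde\beta_2(r). \]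
   Context: $\mathcal{X}$ is a Polish space with metric $d_{\mathcal{X}}$, $x_0$ fixed, $B_r=\{x:d_{\mathcal{X}}(x_0,x)\le r\}$, $B_r^{\mathsf c}=\mathcal{X}\setminus B_r$; $a\wedge b=\min\{a,b\}$. A non-increasing $l:[0,\infty)\to[0,\infty)$ is a lower decay of $K$ if $\inf_{x,y\in B_r}K(x,y)\ge l(r)$ for all $r>0$. $L_{K^\top,\nu}g(x)=\int K(y,x)g(y)\,\nu(dy)$. A tail function is a non-increasing $\alpha:(0,\infty)\to[0,\infty)$ with $\lim_{r\to\infty}\alpha(r)=0$. For $\rho\in\mathcal{P}(\mathcal{X})$: $\mathcal{F}^{\rho}_{\alpha,\tilde\alpha}$ is the set of $f\in L^2(\rho)$ with $f\mathbf 1_{B_{m_2}}\ge0$ $\rho$-a.s., $\int_{B_r^{\mathsf c}}f_+\,d\rho\le\alpha(r)\int f\,d\rho$ for all $r\ge m_1$, $\int_{B_r^{\mathsf c}}f_-\,d\rho\le\tilde\alpha(r)\int f\,d\rho$ for all $r\ge m_2$; $\mathcal{G}^{\rho}_{\alpha,\tilde\alpha}=\{g\in L^2(\rho):\int fg\,d\rho\ge0\ \forall f\in\mathcal{F}^{\rho}_{\alpha,\tilde\alpha}\}$; superscript $norm$ denotes elements with $\int\cdot\,d\rho=1$. *)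

(* Defs.v *)
From HB Require Import structures.
From mathcomp Require Import all_boot all_order all_algebra.
From mathcomp Require Import all_classical all_reals all_analysis.
Set Implicit Arguments. Unset Strict Implicit. Unset Printing Implicit Defensive.
Import Order.TTheory GRing.Theory Num.Theory.
Import numFieldNormedType.Exports.
Local Open Scope classical_set_scope.
Local Open Scope ring_scope.

Section Defs.
Context {d : measure_display} {X : measurableType d} {R : realType}.

Definition is_metric (dX : X -> X -> R) : Prop :=
  [/\ forall x y, 0 <= dX x y, forall x y, dX x y = 0 <-> x = y,
      forall x y, dX x y = dX y x &
      forall x y z, dX x z <= dX x y + dX y z].

Definition polish_borel (dX : X -> X -> R) : Prop :=
  [/\ is_metric dX,
      exists D : set X, countable D /\
        forall x (e : R), 0 < e -> exists2 y, D y & dX x y < e,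
      (forall u : nat -> X,
         (forall e : R, 0 < e -> exists N, forall m n, (N <= m)%N -> (N <= n)%N ->
            dX (u m) (u n) < e) ->
         exists x, forall e : R, 0 < e -> exists N, forall n, (N <= n)%N -> dX (u n) x < e) &
      (forall A : set X, measurable A <->
         <<s [set O : set X | forall x, O x -> exists2 e : R, 0 < e &
               [set y | dX x y < e] `<=` O] >> A)].

Definition ball_c (dX : X -> X -> R) (x0 : X) (r : R) : set X :=
  [set x | dX x0 x <= r].

Definition lower_decay (dX : X -> X -> R) (x0 : X) (K : X -> X -> R) (l : R -> R) : Prop :=
  [/\ (forall r, 0 <= r -> 0 <= l r),
      (forall r s, 0 <= r -> r <= s -> l s <= l r) &
      (forall r, 0 < r -> forall x y, ball_c dX x0 r x -> ball_c dX x0 r y -> l r <= K x y)].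

Definition tail_fun (a : R -> R) : Prop :=
  [/\ (forall r, 0 < r -> 0 <= a r),
      (forall r s, 0 < r -> r <= s -> a s <= a r) &
      (a x @[x --> +oo%R] --> (0 : R))].

Definition L2 (rho : probability X R) (f : X -> R) : Prop :=
  measurable_fun setT f /\ (\int[rho]_x ((f x) ^+ 2)%:E < +oo)%E.

Definition Fclass (dX : X -> X -> R) (x0 : X) (m1 m2 : R) (rho : probability X R)
  (a ta : R -> R) (f : X -> R) : Prop :=
  [/\ L2 rho f,
      {ae rho, forall x, ball_c dX x0 m2 x -> 0 <= f x},
      (forall r, m1 <= r ->
         (\int[rho]_(x in ~` ball_c dX x0 r) (Num.max (f x) 0)%:E
           <= (a r)%:E * \int[rho]_x (f x)%:E)%E) &
      (forall r, m2 <= r ->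
         (\int[rho]_(x in ~` ball_c dX x0 r) (Num.max (- f x) 0)%:E
           <= (ta r)%:E * \int[rho]_x (f x)%:E)%E)].

Definition Fclass_norm dX x0 m1 m2 rho a ta f : Prop :=
  Fclass dX x0 m1 m2 rho a ta f /\ (\int[rho]_x (f x)%:E = 1)%E.

Definition Gclass (dX : X -> X -> R) (x0 : X) (m1 m2 : R) (rho : probability X R)
  (a ta : R -> R) (g : X -> R) : Prop :=
  L2 rho g /\ forall f, Fclass dX x0 m1 m2 rho a ta f ->
    (0 <= \int[rho]_x (f x * g x)%:E)%E.

Definition Gclass_norm dX x0 m1 m2 rho a ta g : Prop :=
  Gclass dX x0 m1 m2 rho a ta g /\ (\int[rho]_x (g x)%:E = 1)%E.

Definition LKt (K : X -> X -> R) (nu : probability X R) (g : X -> R) (x : X) : R :=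
  fine (\int[nu]_y (K y x * g y)%:E).

Definition ediv (c a : R) : \bar R :=
  if a == 0%R then (if c == 0%R then 0%E else +oo%E) else (c / a)%R%:E.

Definition beta2_tilde (dX : X -> X -> R) (x0 : X) (m1 : R) (nu : probability X R)
  (a2 : R -> R) (r : R) : \bar R :=
  ((fine (nu (ball_c dX x0 m1)))^-1)%:E *
  ereal_sup [set ediv (fine (nu (~` ball_c dX x0 a))) (Num.min (a2 a) 1%R) | a in [set a : R | (r <= a)%R]].

Definition beta2 (dX : X -> X -> R) (x0 : X) (m1 : R) (nu : probability X R)
  (ta2 : R -> R) (r : R) : \bar R :=
  ((fine (nu (ball_c dX x0 m1)))^-1)%:E *
  (ereal_sup [set ediv (fine (nu (~` ball_c dX x0 a))) (ta2 a) | a in [set a : R | (r <= a)%R]]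
   + nu (~` ball_c dX x0 r)).

End Defs.

(* Main.v *)
Require Import Defs.
From HB Require Import structures.
From mathcomp Require Import all_boot all_order all_algebra.
From mathcomp Require Import all_classical all_reals all_analysis.
From mathcomp Require Import measurable_realfun.
From mathcomp Require Import ring lra.
Import Order.TTheory GRing.Theory Num.Theory.
Import numFieldNormedType.Exports.
Local Open Scope classical_set_scope.
Local Open Scope ring_scope.
Set Implicit Arguments. Unset Strict Implicit. Unset Printing Implicit Defensive.

Section H.
Context d (T : measurableType d) (R : realType) (P : probability T R).

Lemma intMb (F h : T -> R) M : measurable_fun setT F -> (forall x, `|F x| <= M) ->
  P.-integrable setT (EFin \o h) ->
  P.-integrable setT (EFin \o (fun x => F x * h x)).
Proof.
move=> mF FM ih.
have := @integrableMr _ _ _ P setT measurableT F (EFin \o h) mF _ ih.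
have -> : ((EFin \o F) \* (EFin \o h))%E = EFin \o (fun x => F x * h x).
  by apply/funext => x /=; rewrite EFinM.
apply; exists M; split; first exact: num_real.
by move=> y My x _; apply: le_trans (FM x) (ltW My).
Qed.

Lemma bdd_L2 (F : T -> R) M : measurable_fun setT F -> (forall x, `|F x| <= M) -> L2 P F.
Proof.
move=> mF FM; split => //.
apply: (@le_lt_trans _ _ (\int[P]_x (cst ((M ^+ 2)%:E) x))%E).
  apply: ge0_le_integral => //.
  - by move=> x _; rewrite lee_fin sqr_ge0.
  - by apply/measurable_EFinP; exact: measurable_funX.
  - move=> x _; rewrite lee_fin /=.
    rewrite -real_normK ?num_real //.
    have := FM x; have := normr_ge0 (F x); nra.
rewrite integral_cst // /= probability_setT mule1; exact: ltry.
Qed.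

Lemma L2_int f : L2 P f -> P.-integrable setT (EFin \o f).
Proof.
move=> [mf f2].
have mf2 : measurable_fun setT (fun x => f x ^+ 2) by exact: measurable_funX.
have i2 : P.-integrable setT (EFin \o (fun x => f x ^+ 2)).
  apply/integrableP; split; first exact/measurable_EFinP.
  under eq_integral do rewrite /= ger0_norm ?sqr_ge0 //.
  exact: f2.
have i1 : P.-integrable setT (EFin \o (fun x => 1 + f x ^+ 2)).
  have -> : EFin \o (fun x => 1 + f x ^+ 2) = (EFin \o cst 1) \+ (EFin \o (fun x => f x ^+ 2)).
    by apply/funext => x /=; rewrite EFinD.
  apply: integrableD => //; exact: finite_measure_integrable_cst.
apply: le_integrable i1 => //; first exact/measurable_EFinP.
move=> x _ /=; rewrite lee_fin [X in _ <= X]ger0_norm ?addr_ge0 ?sqr_ge0 //.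
rewrite -real_normK ?num_real //.
have := normr_ge0 (f x); nra.
Qed.


Lemma Rint_E (h : T -> R) D : measurable D -> P.-integrable D (EFin \o h) ->
  (\int[P]_(x in D) (h x)%:E = (Rintegral P D h)%:E)%E.
Proof. by move=> mD ih; rewrite /Rintegral fineK //; exact: integrable_fin_num. Qed.

Lemma int_indic (h : T -> R) D :
  (\int[P]_(x in D) (h x)%:E = \int[P]_x (\1_D x * h x)%:E)%E.
Proof.
rewrite integral_mkcond; apply: eq_integral => x _.
rewrite /patch indicE; case: (x \in D); by rewrite ?mul1r ?mul0r.
Qed.

Lemma measE A : measurable A -> P A = (fine (P A))%:E.
Proof. by move=> mA; rewrite fineK // fin_num_measure. Qed.

End H.

Section H2.
Context (R : realType).

Lemma ediv_le (c a S : R) : 0 <= a -> 0 <= c -> (ediv c a <= S%:E)%E -> c <= a * S.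
Proof.
move=> a0 c0; rewrite /ediv; case: eqP => [->|/eqP an0].
  by case: eqP => [->|_]; rewrite ?mul0r // leye_eq.
rewrite lee_fin => h; have ap : 0 < a by rewrite lt_def an0 a0.
by have := ler_wpM2l a0 h; rewrite mulrCA divff ?mulr1.
Qed.

Lemma ediv_ge0 (c a : R) : 0 <= a -> 0 <= c -> (0 <= ediv c a)%E.
Proof.
move=> a0 c0; rewrite /ediv; case: eqP => [_|/eqP an0].
  by case: eqP.
by rewrite lee_fin divr_ge0.
Qed.

Lemma beta_cases (k : R) (u v : R -> R) (r0 ee : R) :
  0 < k -> (forall a, 0 <= u a) -> (forall a, r0 <= a -> 0 <= v a) -> 0 <= ee ->
  (k%:E * (ereal_sup [set ediv (u a) (v a) | a in [set a : R | (r0 <= a)%R]] + ee%:E) = +oo)%E \/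
  exists b s0, (k%:E * (ereal_sup [set ediv (u a) (v a) | a in [set a : R | (r0 <= a)%R]] + ee%:E))%E = b%:E
    /\ b = k * (s0 + ee) /\ 0 <= s0 /\ forall a, r0 <= a -> u a <= v a * s0.
Proof.
move=> k0 u0 v0 ee0.
set S := ereal_sup _.
have S0 : (0 <= S)%E.
  apply: le_trans (ediv_ge0 (v0 r0 (lexx _)) (u0 r0)) _.
  by apply: ereal_sup_ubound; exists r0 => //=.
case: (leP +oo%E S) => [Sy|Sy].
  left; have -> : S = +oo%E by apply/eqP; rewrite eq_le leey Sy.
  by rewrite addye // mulry gtr0_sg // mul1e.
right; have Sf : S \is a fin_num by rewrite ge0_fin_numE.
exists (k * (fine S + ee)), (fine S); split; first by rewrite -{1}(fineK Sf) -EFinD -EFinM.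
split => //; split; first by rewrite fine_ge0.
move=> a ra; apply: ediv_le => //; first exact: v0.
rewrite fineK //; apply: ereal_sup_ubound; exists a => //.
Qed.

End H2.

Lemma ball_meas d (X : measurableType d) (R : realType) (dX : X -> X -> R) x0 s :
  polish_borel dX -> measurable (ball_c dX x0 s).
Proof.
case=> [[d0 dE dsym dtri] _ _ Hm].
rewrite -[ball_c _ _ _]setCK; apply: measurableC; apply/Hm.
apply: sub_sigma_algebra => x /= hx.
have hx' : s < dX x0 x by rewrite ltNge; apply/negP.
exists (dX x0 x - s); first by rewrite subr_gt0.
move=> y /= hy hy'.
have := dtri x0 y x; rewrite (dsym y x) => h; move: hy'; rewrite /ball_c /= => hy'; lra.
Qed.

Section H3.
Context d (T : measurableType d) (R : realType) (P : probability T R).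
Implicit Types h : T -> R.

Lemma intD h1 h2 : P.-integrable setT (EFin \o h1) -> P.-integrable setT (EFin \o h2) ->
  P.-integrable setT (EFin \o (fun x => h1 x + h2 x)).
Proof.
move=> i1 i2; have := integrableD measurableT i1 i2.
by have -> : ((EFin \o h1) \+ (EFin \o h2))%E = EFin \o (fun x => h1 x + h2 x)
  by apply/funext => x /=; rewrite EFinD.
Qed.

Lemma intB h1 h2 : P.-integrable setT (EFin \o h1) -> P.-integrable setT (EFin \o h2) ->
  P.-integrable setT (EFin \o (fun x => h1 x - h2 x)).
Proof.
move=> i1 i2; have := integrableB measurableT i1 i2.
by have -> : ((EFin \o h1) \- (EFin \o h2))%E = EFin \o (fun x => h1 x - h2 x)
  by apply/funext => x /=; rewrite EFinB.
Qed.

Lemma intZ (k : R) h : P.-integrable setT (EFin \o h) ->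
  P.-integrable setT (EFin \o (fun x => k * h x)).
Proof.
move=> i; apply: (@intMb _ _ _ P (cst k) h `|k|) => //.
Qed.

Lemma intI A h : measurable A -> P.-integrable setT (EFin \o h) ->
  P.-integrable setT (EFin \o (fun x => \1_A x * h x)).
Proof.
move=> mA i; apply: (@intMb _ _ _ P (\1_A) h 1) => //.
by move=> x; rewrite indicE; case: (x \in A); rewrite ?normr1 ?normr0.
Qed.

Lemma intIc A : measurable A -> P.-integrable setT (EFin \o (\1_A : T -> R)).
Proof.
move=> mA; have := @intI A (cst 1) mA (finite_measure_integrable_cst _ _ measurableT).
by have -> : (fun x => \1_A x * cst 1 x) = (\1_A : T -> R) by apply/funext => x; rewrite mulr1.
Qed.

Lemma intpos h : P.-integrable setT (EFin \o h) ->
  P.-integrable setT (EFin \o (fun x => Num.max (h x) 0)).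
Proof. by move=> i; exact: (integrable_funrpos measurableT i). Qed.

Lemma intneg h : P.-integrable setT (EFin \o h) ->
  P.-integrable setT (EFin \o (fun x => Num.max (- h x) 0)).
Proof. by move=> i; exact: (integrable_funrneg measurableT i). Qed.

Lemma RintD h1 h2 : P.-integrable setT (EFin \o h1) -> P.-integrable setT (EFin \o h2) ->
  Rintegral P setT (fun x => h1 x + h2 x) = Rintegral P setT h1 + Rintegral P setT h2.
Proof. by move=> i1 i2; rewrite RintegralD. Qed.

Lemma RintB h1 h2 : P.-integrable setT (EFin \o h1) -> P.-integrable setT (EFin \o h2) ->
  Rintegral P setT (fun x => h1 x - h2 x) = Rintegral P setT h1 - Rintegral P setT h2.
Proof. by move=> i1 i2; rewrite RintegralB. Qed.

Lemma RintZ k h : P.-integrable setT (EFin \o h) ->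
  Rintegral P setT (fun x => k * h x) = k * Rintegral P setT h.
Proof. by move=> i; rewrite RintegralZl. Qed.

Lemma Rle h1 h2 : P.-integrable setT (EFin \o h1) -> P.-integrable setT (EFin \o h2) ->
  (forall x, h1 x <= h2 x) -> Rintegral P setT h1 <= Rintegral P setT h2.
Proof. by move=> i1 i2 h; apply: le_Rintegral. Qed.

Lemma Rint_indic A : measurable A -> Rintegral P setT (\1_A : T -> R) = fine (P A).
Proof. by move=> mA; rewrite /Rintegral integral_indic // setIT. Qed.

Lemma Rint_ge0 h : (forall x, 0 <= h x) -> 0 <= Rintegral P setT h.
Proof. by move=> h0; apply: Rintegral_ge0 => x _. Qed.

Lemma int_dom h D : measurable D -> P.-integrable setT (EFin \o h) ->
  (\int[P]_(x in D) (h x)%:E = (Rintegral P setT (fun x => \1_D x * h x))%:E)%E.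
Proof. by move=> mD i; rewrite int_indic Rint_E // intI. Qed.

Lemma Rint_eq0 h : (forall x, h x = 0) -> Rintegral P setT h = 0.
Proof.
move=> h0; rewrite (@eq_Rintegral _ _ _ P setT (fun _ => 0)); last by move=> x _; rewrite h0.
by rewrite Rintegral_cst // mul0r.
Qed.

End H3.

Lemma posneg (R : realType) (z : R) :
  (0 <= z /\ Num.max z 0 = z /\ Num.max (- z) 0 = 0) \/
  (z < 0 /\ Num.max z 0 = 0 /\ Num.max (- z) 0 = - z).
Proof.
case: (leP 0 z) => hz; [left|right].
  by split => //; split => //; rewrite max_r // oppr_le0.
by split => //; split => //; rewrite max_l // oppr_ge0 ltW.
Qed.

Lemma measG d (X : measurableType d) (R : realType) (nu : probability X R)
  (K : X -> X -> R) (g : X -> R) :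
  measurable_fun setT (fun p : X * X => K p.1 p.2) -> (forall x y, 0 <= K x y <= 1) ->
  nu.-integrable setT (EFin \o g) ->
  measurable_fun setT (fun x => Rintegral nu setT (fun y => K y x * g y)).
Proof.
move=> mK K1 ig.
have mg : measurable_fun setT g by apply/measurable_EFinP; exact: (measurable_int _ ig).
set gp := fun y => Num.max (g y) 0.
set gn := fun y => Num.max (- g y) 0.
have mgp : measurable_fun setT gp by apply: measurable_maxr.
have mgn : measurable_fun setT gn by apply: measurable_maxr => //; exact: measurable_funN.
have mKs x : measurable_fun setT (fun y => K y x).
  exact: (measurable_fun_pair1 x mK).
have mKsw : measurable_fun setT (fun z : X * X => K z.2 z.1).
  rewrite (_ : (fun z : X * X => K z.2 z.1) = (fun p => K p.1 p.2) \o (fun z : X * X => (z.2, z.1))) //.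
  exact: measurableT_comp mK (@measurable_swap _ _ X X).
pose Fp := fun z : X * X => (K z.2 z.1 * gp z.2)%:E.
pose Fn := fun z : X * X => (K z.2 z.1 * gn z.2)%:E.
have mFp : measurable_fun setT Fp.
  apply/measurable_EFinP; apply: measurable_funM => //.
  exact: measurableT_comp mgp measurable_snd.
have mFn : measurable_fun setT Fn.
  apply/measurable_EFinP; apply: measurable_funM => //.
  exact: measurableT_comp mgn measurable_snd.
have Fp0 z : (0 <= Fp z)%E.
  by rewrite lee_fin mulr_ge0 //; [case/andP: (K1 z.2 z.1)|rewrite /gp le_max lexx orbT].
have Fn0 z : (0 <= Fn z)%E.
  by rewrite lee_fin mulr_ge0 //; [case/andP: (K1 z.2 z.1)|rewrite /gn le_max lexx orbT].
have mF1 := measurable_fun_fubini_tonelli_F Fp mFp Fp0.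
have mF2 := measurable_fun_fubini_tonelli_F Fn mFn Fn0.
have Kb x y : `|K x y| <= 1.
  by case/andP: (K1 x y) => h0 h1; rewrite ger0_norm.
have ip x : nu.-integrable setT (EFin \o (fun y => K y x * gp y)).
  by apply: (@intMb _ _ _ nu (fun y => K y x) gp 1) => //; exact: intpos.
have in_ x : nu.-integrable setT (EFin \o (fun y => K y x * gn y)).
  by apply: (@intMb _ _ _ nu (fun y => K y x) gn 1) => //; exact: intneg.
have -> : (fun x => Rintegral nu setT (fun y => K y x * g y)) =
   fine \o (fubini_F nu Fp \- fubini_F nu Fn)%E.
  apply/funext => x /=; rewrite /fubini_F /Fp /Fn /= -integralB_EFin //.
  congr fine; apply: eq_integral => y _; rewrite -EFinB -mulrBr /gp /gn.
  by case: (posneg (g y)) => [[_ [-> ->]]|[_ [-> ->]]]; rewrite ?subr0 ?sub0r ?opprK.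
apply: measurableT_comp; [exact: fine_measurable|]. exact: emeasurable_funB (mF1 nu) (mF2 nu).
Qed.

Lemma ind_in d (T : measurableType d) (R : realType) (A : set T) x : A x -> \1_A x = 1 :> R.
Proof. by move=> h; rewrite indicE mem_set. Qed.

Lemma ind_out d (T : measurableType d) (R : realType) (A : set T) x : ~ A x -> \1_A x = 0 :> R.
Proof. by move=> h; rewrite indicE memNset. Qed.


Lemma core (R : realType) (l t2 tr ar bt bt2 N P b2 a b c e I : R) :
  a - b + c - e = 1 -> 0 <= a -> 0 <= b -> 0 <= c -> 0 <= e ->
  c <= ar -> e <= tr -> b <= t2 -> tr <= t2 -> t2 <= 1/2 ->
  P - N = 1 -> 0 <= N -> N <= 2 * bt -> bt <= 1/2 -> 0 <= b2 -> 0 <= bt2 ->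
  0 <= l -> l <= 1 ->
  (l - 2 * b2 - N) * a - P * b - N * c - P * e <= I ->
  l - t2 - 4 * bt - 4 * ar - 4 * tr - 5 * b2 - 5 * bt2 <= I.
Proof.
move=> habce a0 b0 c0 e0 car etr bt2' trt2 t2h PN N0 Nbt bth b20 bt20 l0 l1 HI.
apply: le_trans HI.
set lam := l - 2 * b2 - N.
have H1 : lam * a - P * b = lam * (1 - c + e) - (P - lam) * b.
  have -> : a = 1 + b - c + e by lra.
  ring.
have H2 : lam - c - b2 - e <= lam * (1 - c + e).
  case: (lerP 0 lam) => hl.
    have : lam <= 1 by rewrite /lam; lra.
    nra.
  have : - (2 * b2 + 1) <= lam by rewrite /lam; lra.
  nra.
have H3 : (P - lam) * b <= t2 + N + b2.
  have -> : P - lam = (1 - l) + 2 * N + 2 * b2 by rewrite /lam; lra.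
  nra.
have H4 : N * c <= c by nra.
have H5 : N * e <= e by nra.
have H6 : P * e = e + N * e.
  have -> : P = 1 + N by lra.
  ring.
have Hl : lam = l - 2 * b2 - N by [].
lra.
Qed.

Lemma posneg2 (R : realType) (z : R) :
  (0 <= z /\ Num.max z 0 = z /\ Num.max (- z) 0 = 0) \/
  (z < 0 /\ Num.max z 0 = 0 /\ Num.max (- z) 0 = - z).
Proof.
case: (leP 0 z) => hz; [left|right].
  by split => //; split => //; rewrite max_r // oppr_le0.
by split => //; split => //; rewrite max_l // oppr_ge0 ltW.
Qed.


Section Ar.
Variable R : realType.
Implicit Types b i j z w k l n m a t F N P Q G lam : R.

Lemma ar1 b i j : 0 <= b -> 0 <= i -> i <= 1 -> 0 <= j -> j <= 1 -> `|b * i + j| <= b + 1.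
Proof. move=> *; rewrite ger0_norm; nra. Qed.

Lemma ar2 n m a t F : n <= m * t -> m <= a -> 0 <= a -> 0 <= t -> t <= F -> n <= a * F.
Proof. move=> *; nra. Qed.

Lemma ar3 b i z : 0 <= b -> 0 <= i -> i <= 1 -> 0 <= z -> (b * i + 0) * z <= b * z - 0.
Proof. move=> b0 *; have := mulr_ge0 b0 (_ : 0 <= z); nra. Qed.

Lemma ar4 b i z : 0 <= b -> 0 <= i -> z < 0 -> (b * i + 1) * z <= b * 0 - - z.
Proof. move=> b0 i0 *; have := mulr_ge0 b0 i0; nra. Qed.

Lemma ar5 N P b : N <= b * P -> P - N = 1 -> b <= 1/2 -> 0 <= N -> N <= 2 * b /\ P <= 2.
Proof. move=> *; split; nra. Qed.

Lemma ar7 b i j : 0 <= b -> 0 <= i -> i <= 1 -> 0 <= j -> j <= 1 -> `|b * i - j| <= b + 1.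
Proof. move=> b0 i0 *; have := mulr_ge0 b0 i0; rewrite ler_norml; move=> *; apply/andP; split; nra. Qed.

Lemma ar10 b i z w : 0 <= b -> 0 <= i -> i <= 1 -> 0 <= z -> b * i * z - w <= b * z - w.
Proof. move=> b0 i0 i1 z0; have := mulr_ge0 b0 z0; nra. Qed.

Lemma ar11 b i z w : 0 <= b -> 0 <= i -> z < 0 -> b * i * z - 0 * z <= b * 0 - w * 0.
Proof. move=> b0 i0 *; have := mulr_ge0 b0 i0; nra. Qed.

Lemma arGP k z : 0 <= k -> k <= 1 -> k * z <= Num.max z 0.
Proof. by move=> *; case: (posneg2 z) => [[? [e1 e2]]|[? [e1 e2]]]; rewrite ?e1 ?e2; nra. Qed.

Lemma arGN k z : 0 <= k -> k <= 1 -> -1 * Num.max (- z) 0 <= k * z.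
Proof. by move=> *; case: (posneg2 z) => [[? [e1 e2]]|[? [e1 e2]]]; rewrite ?e1 ?e2; nra. Qed.

Lemma arGBin l k z : 0 <= l -> l <= k -> k <= 1 ->
  l * Num.max z 0 - l * (0 * Num.max z 0) - Num.max (- z) 0 <= k * z.
Proof. by move=> *; case: (posneg2 z) => [[? [e1 e2]]|[? [e1 e2]]]; rewrite ?e1 ?e2; nra. Qed.

Lemma arGBout l k z : 0 <= k -> k <= 1 ->
  l * Num.max z 0 - l * (1 * Num.max z 0) - Num.max (- z) 0 <= k * z.
Proof. by move=> *; case: (posneg2 z) => [[? [e1 e2]]|[? [e1 e2]]]; rewrite ?e1 ?e2; nra. Qed.

Lemma arLam l P Q N b G : 0 <= l -> l <= 1 -> Q <= b * P -> P <= 2 -> 0 <= b -> 0 <= Q ->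
  P - N = 1 -> 0 <= N -> l * P - l * Q - N <= G -> l - 2 * b - N <= G.
Proof.
move=> l0 l1 QP P2 b0 Q0 PN N0 h.
have Q2 : Q <= 2 * b by nra.
have lQ : l * Q <= Q by nra.
have lP : l <= l * P by nra.
lra.
Qed.

Lemma arGb G P N : - N <= G -> G <= P -> 0 <= N -> 0 <= P -> `|G| <= P + N.
Proof. by move=> *; rewrite ler_norml; apply/andP; split; lra. Qed.

Lemma arFin lam P N G z : lam <= G -> G <= P ->
  lam * (1 * Num.max z 0) - P * (1 * Num.max (- z) 0) - N * (0 * Num.max z 0)
  - P * (0 * Num.max (- z) 0) <= G * z.
Proof. by move=> *; case: (posneg2 z) => [[? [e1 e2]]|[? [e1 e2]]]; rewrite ?e1 ?e2; nra. Qed.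

Lemma arFout lam P N G z : - N <= G -> G <= P ->
  lam * (0 * Num.max z 0) - P * (0 * Num.max (- z) 0) - N * (1 * Num.max z 0)
  - P * (1 * Num.max (- z) 0) <= G * z.
Proof. by move=> *; case: (posneg2 z) => [[? [e1 e2]]|[? [e1 e2]]]; rewrite ?e1 ?e2; nra. Qed.

End Ar.


Unset Implicit Arguments.

Theorem lemma4p5 (R : realType) (d : measure_display) (X : measurableType d)
  (dX : X -> X -> R) (x0 : X) (mu nu : probability X R) (m1 m2 : R)
  (K : X -> X -> R) (l : R -> R) (a1 ta1 a2 ta2 : R -> R) (r : R) :
  polish_borel dX ->
  0 < m1 -> m1 <= m2 ->
  measurable_fun [set: X * X] (fun p => K p.1 p.2) ->
  (forall x y, 0 < K x y <= 1) ->
  lower_decay dX x0 K l ->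
  tail_fun a1 -> tail_fun ta1 -> tail_fun a2 -> tail_fun ta2 ->
  (0 < mu (ball_c dX x0 m1))%E -> (0 < nu (ball_c dX x0 m1))%E ->
  (forall s, 0 < s -> 0 < a1 s) -> (forall s, 0 < s -> 0 < a2 s) ->
  m2 <= r ->
  ta1 m2 <= 1 / 2 ->
  (beta2_tilde dX x0 m1 nu a2 m1 <= (1 / 2)%:E)%E ->
  l r <= 1 ->
  forall f g, Fclass_norm dX x0 m1 m2 mu a1 ta1 f ->
    Gclass_norm dX x0 m1 m2 nu a2 ta2 g ->
  ((l r)%:E - (ta1 m2)%:E - 4%:E * beta2_tilde dX x0 m1 nu a2 m1
     - (4 * a1 r)%:E - (4 * ta1 r)%:E
     - 5%:E * beta2 dX x0 m1 nu ta2 r - 5%:E * beta2_tilde dX x0 m1 nu a2 r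
   <= \int[mu]_x (LKt K nu g x * f x)%:E)%E.
Proof.
move=> PB m1p m12 mK Kb [l0 lmon lK] [a1p a1m _] [ta1p ta1m _] [a2p a2m _]
  [ta2p ta2m _] muB nuB a1pos a2pos m2r ta1h bth lr1 f g
  [[L2f fae fpos fneg] f1] [[L2g gG] g1].
pose B := ball_c dX x0.
have mB s : measurable (B s) by apply: ball_meas.
have mBc s : measurable (~` B s) by apply: measurableC.
have Bmon s t : s <= t -> B s `<=` B t.
  by move=> st x; rewrite /B /ball_c /= => h; apply: le_trans h st.
have m20 : 0 < m2 by apply: lt_le_trans m12.
have r0 : 0 < r by apply: lt_le_trans m2r.
have intf := L2_int L2f.
have intg := L2_int L2g.
have mf : measurable_fun setT f := L2f.1.
have mg : measurable_fun setT g := L2g.1.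
pose nB1 := fine (nu (B m1)).
have nB1E : nu (B m1) = nB1%:E by apply: measE.
have nB1p : 0 < nB1 by rewrite -lte_fin -nB1E.
pose nb := fun s => fine (nu (~` B s)).
have nbE s : nu (~` B s) = (nb s)%:E by apply: measE.
have nb0 s : 0 <= nb s by rewrite -lee_fin -nbE.
have kp : 0 < nB1^-1 by rewrite invr_gt0.
have a2min a : m1 <= a -> 0 <= Num.min (a2 a) 1.
  by move=> h; rewrite le_min ler01 andbT a2p // (lt_le_trans m1p).
have [bty|[bt [T [btE [btT [T0 HT]]]]]] :=
  @beta_cases R (nB1^-1) nb (fun a => Num.min (a2 a) 1) m1 0 kp nb0 a2min (lexx 0).
  by move: bth; rewrite /beta2_tilde -[ereal_sup _]adde0 bty leye_eq.
have btE' : beta2_tilde dX x0 m1 nu a2 m1 = bt%:E by rewrite /beta2_tilde -[ereal_sup _]adde0.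
have bth' : bt <= 1/2 by rewrite -lee_fin -btE'.
have bt0 : 0 <= bt by rewrite btT mulr_ge0 // ?addr0 // ltW.
have btnB : bt * nB1 = T by rewrite btT addr0 mulrAC mulVf ?mul1r // gt_eqF.
have m1r : m1 <= r by apply: le_trans m2r.
have ta2r a : r <= a -> 0 <= ta2 a by move=> h; apply: ta2p; apply: lt_le_trans h.
have [b2y|[b2 [S2 [b2E [b2S [S20 HS2]]]]]] :=
  @beta_cases R (nB1^-1) nb ta2 r (nb r) kp nb0 ta2r (nb0 r).
  rewrite /beta2 nbE b2y mulry gtr0_sg // mul1e /= addeNy addNye; exact: leNye.
have b2E' : beta2 dX x0 m1 nu ta2 r = b2%:E by rewrite /beta2 nbE.
have a2min' a : r <= a -> 0 <= Num.min (a2 a) 1.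
  by move=> h; apply: a2min; apply: le_trans h.
have [bt2y|[bt2 [T2 [bt2E [bt2T [T20 HT2]]]]]] :=
  @beta_cases R (nB1^-1) nb (fun a => Num.min (a2 a) 1) r 0 kp nb0 a2min' (lexx 0).
  rewrite /beta2_tilde -[ereal_sup [set _ | _ in [set a | r <= a]]]adde0 bt2y.
  rewrite mulry gtr0_sg // mul1e /= addeNy; exact: leNye.
have bt2E' : beta2_tilde dX x0 m1 nu a2 r = bt2%:E.
  by rewrite /beta2_tilde -[ereal_sup [set _ | _ in [set a | r <= a]]]adde0.
have bt20 : 0 <= bt2 by rewrite bt2T mulr_ge0 // ?addr0 // ltW.
have b20 : 0 <= b2 by rewrite b2S mulr_ge0 // ?addr_ge0 // ltW.
rewrite btE' b2E' bt2E' -!EFinM -!EFinB.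
pose fp := fun x => Num.max (f x) 0.
pose fn := fun x => Num.max (- f x) 0.
have ifp : mu.-integrable setT (EFin \o fp) := intpos intf.
have ifn : mu.-integrable setT (EFin \o fn) := intneg intf.
have fp0 x : 0 <= fp x by rewrite /fp le_max lexx orbT.
have fn0 x : 0 <= fn x by rewrite /fn le_max lexx orbT.
pose a := Rintegral mu setT (fun x => \1_(B r) x * fp x).
pose b := Rintegral mu setT (fun x => \1_(B r) x * fn x).
pose c := Rintegral mu setT (fun x => \1_(~` B r) x * fp x).
pose e := Rintegral mu setT (fun x => \1_(~` B r) x * fn x).
have ia := intI (mB r) ifp.
have ib := intI (mB r) ifn.
have ic := intI (mBc r) ifp.
have ie := intI (mBc r) ifn.
have ind01 (A : set X) x : 0 <= \1_A x :> R by rewrite indicE; case: (x \in A).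
have a0 : 0 <= a by apply: Rint_ge0 => x; rewrite mulr_ge0.
have b0 : 0 <= b by apply: Rint_ge0 => x; rewrite mulr_ge0.
have c0 : 0 <= c by apply: Rint_ge0 => x; rewrite mulr_ge0.
have e0 : 0 <= e by apply: Rint_ge0 => x; rewrite mulr_ge0.
have Rf1 : Rintegral mu setT f = 1 by rewrite /Rintegral f1.
have habce : a - b + c - e = 1.
  rewrite -Rf1 -addrA /a /b /c /e -(RintB ia ib) -(RintB ic ie) -(RintD (intB ia ib) (intB ic ie)).
  apply: eq_Rintegral => x _; rewrite !indicE in_setC /fp /fn.
  case: (posneg (f x)) => [[_ [-> ->]]|[_ [-> ->]]]; case: (x \in B r) => /=; ring.
have cle : c <= a1 r.
  by have := fpos r m1r; rewrite f1 mule1 (int_dom (mBc r) ifp) lee_fin.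
have ele : e <= ta1 r.
  by have := fneg r m2r; rewrite f1 mule1 (int_dom (mBc r) ifn) lee_fin.
have ind1 (A : set X) x : \1_A x <= 1 :> R by rewrite indicE; case: (x \in A).
have ble : b <= ta1 m2.
  have ifn2 := intI (mB m2) ifn.
  have ifn2c := intI (mBc m2) ifn.
  apply: (@le_trans _ _ (Rintegral mu setT fn)).
    by apply: Rle => // x; rewrite ler_piMl.
  have -> : Rintegral mu setT fn = Rintegral mu setT (fun x => \1_(B m2) x * fn x)
     + Rintegral mu setT (fun x => \1_(~` B m2) x * fn x).
    rewrite -(RintD ifn2 ifn2c); apply: eq_Rintegral => x _.
    by rewrite !indicE in_setC /fn; case: (x \in B m2) => /=; ring.
  have -> : Rintegral mu setT (fun x => \1_(B m2) x * fn x) = 0.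
    rewrite /Rintegral (ae_eq_integral (cst 0%E)) ?integral0 //.
    - exact: (measurable_int _ ifn2).
    - apply: filterS fae => x h _; rewrite indicE; case: (boolP (x \in B m2)) => hx.
        by rewrite /fn max_r ?mulr0 // oppr_le0 h //; apply: set_mem.
      by rewrite mul0r.
  by have := fneg m2 (lexx m2); rewrite f1 mule1 (int_dom (mBc m2) ifn) lee_fin add0r.
have ta1r2 : ta1 r <= ta1 m2 by apply: ta1m.
pose gp := fun x => Num.max (g x) 0.
pose gn := fun x => Num.max (- g x) 0.
have igp : nu.-integrable setT (EFin \o gp) := intpos intg.
have ign : nu.-integrable setT (EFin \o gn) := intneg intg.
have gp0 x : 0 <= gp x by rewrite /gp le_max lexx orbT.
have gn0 x : 0 <= gn x by rewrite /gn le_max lexx orbT.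
pose P := Rintegral nu setT gp.
pose N := Rintegral nu setT gn.
have P0 : 0 <= P by apply: Rint_ge0.
have N0 : 0 <= N by apply: Rint_ge0.
have Rg1 : Rintegral nu setT g = 1 by rewrite /Rintegral g1.
have PN : P - N = 1.
  rewrite -Rg1 /P /N -(RintB igp ign); apply: eq_Rintegral => x _; rewrite /gp /gn.
  by case: (posneg (g x)) => [[_ [-> ->]]|[_ [-> ->]]]; ring.
pose A := g @^-1` [set` `]-oo, (0:R)[].
have mA : measurable A by rewrite -(setTI A); exact: (mg measurableT _ (measurable_itv _)).
pose F1 := fun x => bt * \1_(B m1) x + \1_A x.
have mF1 : measurable_fun setT F1.
  apply: measurable_funD; last exact: measurable_indic.
  by apply: measurable_funM => //; exact: measurable_indic.
have F1b x : `|F1 x| <= bt + 1.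
  by rewrite /F1; apply: ar1.
have F10 x : 0 <= F1 x by rewrite /F1 addr_ge0 // mulr_ge0.
have L2F1 := bdd_L2 nu mF1 F1b.
have iF1 := L2_int L2F1.
have RF1 : Rintegral nu setT F1 = bt * nB1 + fine (nu A).
  rewrite /F1 RintD ?intZ ?intIc // RintZ ?intIc // !Rint_indic //.
have nuA0 : 0 <= fine (nu A) by rewrite fine_ge0.
have TF1 : T <= Rintegral nu setT F1 by rewrite RF1 btnB lerDl.
have FcF1 : Fclass dX x0 m1 m2 nu a2 ta2 F1.
  split => //.
  - by apply: aeW => x _; exact: F10.
  - move=> s hs; rewrite (int_dom (mBc s) (intpos iF1)) (Rint_E measurableT iF1) -EFinM lee_fin.
    have s0 : 0 < s by apply: lt_le_trans hs.
    apply: (@le_trans _ _ (nb s)).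
      rewrite /nb -Rint_indic //; apply: Rle => //; first by apply: intI => //; exact: intpos.
        exact: (@intIc _ _ _ nu _ (mBc s)).
      move=> x; rewrite [in X in _ <= X]indicE; case: (boolP (x \in ~` B s)) => hx.
        rewrite indicE hx mul1r max_l // /F1 indicE memNset ?mulr0 ?add0r //.
        by move=> h; move/set_mem: hx; apply; apply: Bmon h.
      by rewrite indicE (negbTE hx) mul0r.
    apply: ar2 (HT s hs) _ _ T0 TF1; first by rewrite ge_min lexx.
    exact: a2p.
  - move=> s hs; rewrite (int_dom (mBc s) (intneg iF1)) (Rint_E measurableT iF1) -EFinM lee_fin.
    rewrite Rint_eq0; last by move=> x; rewrite max_r ?mulr0 // oppr_le0.
    have s0 : 0 < s by apply: lt_le_trans m20 hs.
    by rewrite mulr_ge0 // ?ta2p // (le_trans T0 TF1).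
have iF1g : nu.-integrable setT (EFin \o (fun x => F1 x * g x)).
  exact: (@intMb _ _ _ nu F1 g (bt + 1)).
have NbtP : N <= bt * P.
  have := gG F1 FcF1; rewrite (Rint_E measurableT iF1g) lee_fin => h.
  rewrite -subr_ge0 -(RintZ bt igp) -(RintB (intZ bt igp) ign).
  apply: le_trans h _; apply: Rle => // [|x]; first by apply: intB => //; exact: intZ.
  rewrite /F1 /gp /gn; have := ind01 (B m1) x; have := ind1 (B m1) x.
  case: (posneg (g x)) => [[hg [-> ->]]|[hg [-> ->]]].
    rewrite (@ind_out _ _ _ A); last by rewrite /A /= in_itv /= ltNge hg.
    by move=> h1 h2; apply: ar3.
  rewrite (@ind_in _ _ _ A); last by rewrite /A /= in_itv /= hg.
  by move=> h1 h2; apply: ar4.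
have [Nbt P2] := ar5 NbtP PN bth' N0.
pose A2 := (g @^-1` [set` `]0, +oo[]) `&` ~` B r.
have mA2 : measurable A2.
  apply: measurableI => //; rewrite -(setTI (g @^-1` _)).
  exact: (mg measurableT _ (measurable_itv _)).
have A2r x : A2 x -> ~ B r x by case.
have A2g x : A2 x -> 0 < g x by case => /= h _; move: h; rewrite in_itv /= andbT.
pose F2 := fun x => b2 * \1_(B m1) x - \1_A2 x.
have mF2 : measurable_fun setT F2.
  apply: measurable_funB; last exact: measurable_indic.
  by apply: measurable_funM => //; exact: measurable_indic.
have F2b x : `|F2 x| <= b2 + 1.
  rewrite /F2; have := ind01 (B m1) x; have := ind1 (B m1) x; have := ind01 A2 x;
    have := ind1 A2 x.
  by move=> h1 h2 h3 h4; apply: ar7.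
have L2F2 := bdd_L2 nu mF2 F2b.
have iF2 := L2_int L2F2.
have RF2 : Rintegral nu setT F2 = b2 * nB1 - fine (nu A2).
  rewrite /F2 RintB ?intZ ?intIc // RintZ ?intIc // !Rint_indic //.
have nuA2 : fine (nu A2) <= nb r.
  rewrite -lee_fin -measE // -nbE; apply: le_measure; rewrite ?inE //.
have b2nB : b2 * nB1 = S2 + nb r by rewrite b2S mulrAC mulVf ?mul1r // gt_eqF.
have SF2 : S2 <= Rintegral nu setT F2 by rewrite RF2 b2nB -addrA lerDl subr_ge0.
have F2neg x : Num.max (- F2 x) 0 = \1_A2 x.
  rewrite /F2; case: (boolP (x \in A2)) => hx.
    have hB1 : x \notin B m1.
      by apply/negP => /set_mem h; apply: (A2r x (set_mem hx)); apply: Bmon m1r _ h.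
    by rewrite !indicE hx (negbTE hB1) mulr0 sub0r opprK max_l.
  by rewrite [\1_A2 x]indicE (negbTE hx) subr0 max_r // oppr_le0 mulr_ge0.
have F2pos x : Num.max (F2 x) 0 = b2 * \1_(B m1) x.
  rewrite /F2; case: (boolP (x \in A2)) => hx.
    have hB1 : x \notin B m1.
      by apply/negP => /set_mem h; apply: (A2r x (set_mem hx)); apply: Bmon m1r _ h.
    by rewrite !indicE hx (negbTE hB1) mulr0 sub0r max_r.
  by rewrite [\1_A2 x]indicE (negbTE hx) subr0 max_l // mulr_ge0.
have FcF2 : Fclass dX x0 m1 m2 nu a2 ta2 F2.
  split => //.
  - apply: aeW => x hx; rewrite /F2 [\1_A2 x]indicE memNset ?subr0 ?mulr_ge0 //.
    by move=> /A2r; apply; apply: Bmon m2r _ hx.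
  - move=> s hs; rewrite (int_dom (mBc s) (intpos iF2)) (Rint_E measurableT iF2) -EFinM lee_fin.
    have s0 : 0 < s by apply: lt_le_trans hs.
    rewrite Rint_eq0; first by rewrite mulr_ge0 // ?a2p // (le_trans S20 SF2).
    move=> x; rewrite F2pos !indicE; case: (boolP (x \in ~` B s)) => hx; last by rewrite mul0r.
    rewrite memNset ?mulr0 //; move=> h; move/set_mem: hx; apply; apply: Bmon hs _ h.
  - move=> s hs; rewrite (int_dom (mBc s) (intneg iF2)) (Rint_E measurableT iF2) -EFinM lee_fin.
    have s0 : 0 < s by apply: lt_le_trans m20 hs.
    pose t := Num.max s r.
    have rt : r <= t by rewrite le_max lexx orbT.
    have st : s <= t by rewrite le_max lexx.
    apply: (@le_trans _ _ (nb t)).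
      rewrite /nb -Rint_indic //; apply: Rle => //; first by apply: intI => //; exact: intneg.
        exact: (@intIc _ _ _ nu _ (mBc t)).
      move=> x; rewrite F2neg !indicE; case: (boolP (x \in ~` B s)) => hx; last first.
        by rewrite mul0r; case: (x \in ~` B t).
      rewrite mul1r; case: (boolP (x \in A2)) => hA //=.
      rewrite mem_set //= /B /ball_c /t => h.
      move/set_mem: hx; rewrite /B /ball_c /=; move: (A2r x (set_mem hA)); rewrite /B /ball_c /=.
      by move=> h1 h2; move: h => /=; rewrite le_max => /orP[] h; [apply: h2|apply: h1].
    apply: ar2 (HS2 t rt) (ta2m s t s0 st) (ta2p s s0) S20 SF2.
have iF2g : nu.-integrable setT (EFin \o (fun x => F2 x * g x)).
  exact: (@intMb _ _ _ nu F2 g (b2 + 1)).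
pose Q := Rintegral nu setT (fun x => \1_(~` B r) x * gp x).
have iQ := intI (mBc r) igp.
have Q0 : 0 <= Q by apply: Rint_ge0 => x; rewrite mulr_ge0.
have QP : Q <= b2 * P.
  have := gG F2 FcF2; rewrite (Rint_E measurableT iF2g) lee_fin => h.
  rewrite -subr_ge0 -(RintZ b2 igp) -(RintB (intZ b2 igp) iQ).
  apply: le_trans h _; apply: Rle => // [|x]; first by apply: intB => //; exact: intZ.
  rewrite /F2 /gp mulrBl; have := ind01 (B m1) x; have := ind1 (B m1) x.
  case: (posneg (g x)) => [[hg [-> _]]|[hg [-> _]]].
    have -> : \1_A2 x * g x = \1_(~` B r) x * g x.
      case: (boolP (g x == 0)) => [/eqP ->|gx0]; first by rewrite !mulr0.
      have gxp : 0 < g x by rewrite lt_def gx0 hg.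
      rewrite !indicE; case: (boolP (x \in ~` B r)) => hx.
        rewrite mem_set //; split; last exact: set_mem hx.
        by rewrite /= in_itv /= andbT.
      by rewrite memNset // => -[_ h]; move: hx; rewrite (mem_set h).
    by move=> h1 h2; apply: ar10.
  rewrite (@ind_out _ _ _ A2); last by move=> /A2g; rewrite ltNge (ltW hg).
  by move=> h1 h2; apply: ar11.
have Kb' x y : 0 <= K x y <= 1 by case/andP: (Kb x y) => h1 h2; rewrite ltW.
have Kn x y : `|K x y| <= 1 by case/andP: (Kb' x y) => h1 h2; rewrite ger0_norm.
have mKs x : measurable_fun setT (fun y => K y x) := measurable_fun_pair1 x mK.
pose G := fun x => Rintegral nu setT (fun y => K y x * g y).
have iKg x : nu.-integrable setT (EFin \o (fun y => K y x * g y)).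
  exact: (@intMb _ _ _ nu (fun y => K y x) g 1 (mKs x) (fun y => Kn y x) intg).
have GP x : G x <= P.
  by apply: Rle => // y; rewrite /gp; case/andP: (Kb' y x) => k0 k1; apply: arGP.
have GN x : - N <= G x.
  have -> : - N = Rintegral nu setT (fun y => -1 * gn y) by rewrite RintZ // mulN1r.
  apply: Rle => //; first exact: intZ.
  by move=> y; rewrite /gn; case/andP: (Kb' y x) => k0 k1; apply: arGN.
have GB x : B r x -> l r - 2 * b2 - N <= G x.
  move=> hx.
  have i1 : nu.-integrable setT (EFin \o (fun y => l r * gp y - l r * (\1_(~` B r) y * gp y) - gn y)).
    by apply: intB => //; apply: intB; apply: intZ.
  have h : l r * P - l r * Q - N <= G x.
    rewrite /P /Q /N -(RintZ (l r) igp) -(RintZ (l r) iQ) -(RintB (intZ (l r) igp) (intZ (l r) iQ)).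
    rewrite -(RintB (intB (intZ (l r) igp) (intZ (l r) iQ)) ign).
    apply: Rle => // y; rewrite /gp /gn; case/andP: (Kb' y x) => k0 k1.
    case: (boolP (y \in B r)) => hy.
      rewrite (@ind_out _ _ _ (~` B r)); last by move=> /(_ (set_mem hy)).
      by apply: arGBin => //; [exact: l0 (ltW r0)|exact: lK r r0 y x (set_mem hy) hx].
    rewrite (@ind_in _ _ _ (~` B r)); last by move=> h; move: hy; rewrite (mem_set h).
    exact: arGBout.
  exact: arLam (l0 r (ltW r0)) lr1 QP P2 b20 Q0 PN N0 h.
have mG : measurable_fun setT G := measG mK Kb' intg.
have Gb x : `|G x| <= P + N.
  exact: arGb (GN x) (GP x) N0 P0.
have iGf : mu.-integrable setT (EFin \o (fun x => G x * f x)).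
  exact: (@intMb _ _ _ mu G f (P + N) mG Gb intf).
rewrite (Rint_E measurableT iGf) lee_fin.
apply: (core habce a0 b0 c0 e0 cle ele ble ta1r2 ta1h PN N0 Nbt bth' b20 bt20 (l0 r (ltW r0)) lr1).
set lam := l r - 2 * b2 - N.
have -> : lam * a - P * b - N * c - P * e = Rintegral mu setT (fun x =>
   lam * (\1_(B r) x * fp x) - P * (\1_(B r) x * fn x) - N * (\1_(~` B r) x * fp x)
   - P * (\1_(~` B r) x * fn x)).
  by rewrite !RintB ?intB ?intZ // !RintZ.
apply: Rle => //; first by repeat apply: intB; apply: intZ.
move=> x; rewrite /fp /fn.
case: (boolP (x \in B r)) => hx.
  rewrite (@ind_in _ _ _ (B r)) ?(@ind_out _ _ _ (~` B r)); last 2 first.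
  - by move=> /(_ (set_mem hx)).
  - exact: set_mem hx.
  exact: arFin (GB x (set_mem hx)) (GP x).
rewrite (@ind_out _ _ _ (B r)) ?(@ind_in _ _ _ (~` B r)); last 2 first.
- by move=> h; move: hx; rewrite (mem_set h).
- by move=> h; move: hx; rewrite (mem_set h).
exact: arFout (GN x) (GP x).
Qed.
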